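(* Consider $N$ material points $(P_i,m_i)$ whose Cartesian coordinates are given by a smooth map $\mathbf X(\mathbf q,t)\in\mathbb R^{3N}$, $\mathbf q\in\mathbb R^\ell$, and let $\mathbf Q=(m_1\dot P_1,\dots,m_N\dot P_N)\in\mathbb R^{3N}$ be the vector of momenta. For $r\ge0$ define $\mathcal T_r=\frac12\,\mathbf Q^{(r)}\cdot\mathbf X^{(r+1)}=\frac12\sum_{i=1}^N m_i|P_i^{(r+1)}|^2$, viewed as a function of $\mathbf q,\dots,\mathbf q^{(r+1)},t$. Then for every $k=1,\dots,\ell$, $$\mathbf Q^{(r+1)}\cdot\frac{\partial\mathbf X}{\partial q_k}=\frac{d}{dt}\frac{\partial\mathcal T_r}{\partial q_k^{(r+1)}}-\frac1{r+1}\frac{\partial\mathcal T_r}{\partial q_k^{(r)}}.$$ Equivalently, $J_{\mathbf q}^T\mathbf X\,\mathbf Q^{(r+1)}=-\frac1{r+1}\mathcal O_r[\mathcal T_r]$.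
   Context: $\mathbf q^{(h)}$ denotes the $h$-th time derivative (with $\mathbf q^{(0)}=\mathbf q$), treated as independent variables; $\mathbf X^{(h)}$ is the $h$-th total time derivative of $\mathbf X(\mathbf q(t),t)$ expressed as a function of $\mathbf q,\dots,\mathbf q^{(h)},t$. For $F(\mathbf q,\dots,\mathbf q^{(k)},t)$, $\frac{dF}{dt}=\partial_tF+\sum_{j=0}^k\nabla_{\mathbf q^{(j)}}F\cdot\mathbf q^{(j+1)}$. For $\mathbf w\in\mathbb R^{3N}$, $J_{\mathbf q}^T\mathbf X\,\mathbf w$ is the $\ell$-vector with components $\mathbf w\cdot\partial\mathbf X/\partial q_k$ (Lagrangian components of $\mathbf w$). $\mathcal O_r[\mathcal Y_r]=\nabla_{\mathbf q^{(r)}}\mathcal Y_r-(r+1)\frac{d}{dt}\nabla_{\mathbf q^{(r+1)}}\mathcal Y_r$. *)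

(* Defs.v *)
From Stdlib Require Import Reals Lra List Arith ClassicalEpsilon.
Import ListNotations.
Open Scope R_scope.

(** The derivative of a real function, chosen classically: it is the unique
    [l] with [derivable_pt_lim f x l] whenever f is differentiable at x. *)
Definition deriv (f : R -> R) (x : R) : R :=
  epsilon (inhabits 0%R) (fun l => derivable_pt_lim f x l).

Definition sumR (n : nat) (f : nat -> R) : R :=
  fold_right Rplus 0 (map f (seq 0 n)).

Definition upd1 (z : nat -> R) (i : nat) (x : R) : nat -> R :=
  fun j => if Nat.eqb j i then x else z j.

Definition pdv (i : nat) (f : (nat -> R) -> R) (z : nat -> R) : R :=
  deriv (fun x => f (upd1 z i x)) (z i).

Definition iter_pd (L : list nat) (f : (nat -> R) -> R) : (nat -> R) -> R :=
  fold_right (fun i g => pdv i g) f L.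

Definition depends_only_on (n : nat) (f : (nat -> R) -> R) : Prop :=
  forall z z', (forall i, (i < n)%nat -> z i = z' i) -> f z = f z'.

Definition continuous_n (n : nat) (f : (nat -> R) -> R) : Prop :=
  forall z eps, 0 < eps -> exists delta, 0 < delta /\
    forall z', (forall i, (i < n)%nat -> Rabs (z' i - z i) < delta) ->
      Rabs (f z' - f z) < eps.

Definition smooth_n (n : nat) (f : (nat -> R) -> R) : Prop :=
  depends_only_on n f /\
  forall L : list nat, Forall (fun i => (i < n)%nat) L ->
    continuous_n n (iter_pd L f) /\
    (forall i z, (i < n)%nat ->
       exists l, derivable_pt_lim (fun x => iter_pd L f (upd1 z i x)) (z i) l).

(** A configuration map X(q,t) in R^{3N}, q in R^l: component j of X is
    [X j q t] (j < 3N; components 3i,3i+1,3i+2 are the coordinates of P_i),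
    each depending only on q_0..q_{l-1} and t, and smooth in (q,t). *)
Definition smooth_config (N l : nat) (X : nat -> (nat -> R) -> R -> R) : Prop :=
  forall j, (j < 3 * N)%nat ->
    (forall q q' t, (forall i, (i < l)%nat -> q i = q' i) -> X j q t = X j q' t) /\
    smooth_n (S l) (fun z => X j z (z l)).

(** A jet point: [J h k] = q_k^{(h)} (h-th time derivative, k < l),
    treated as independent variables. *)
Definition Jet := nat -> nat -> R.
Definition JetFun := Jet -> R -> R.

Definition upd2 (J : Jet) (h k : nat) (x : R) : Jet :=
  fun a b => if andb (Nat.eqb a h) (Nat.eqb b k) then x else J a b.

Definition jpd (h k : nat) (F : JetFun) : JetFun :=
  fun J t => deriv (fun x => F (upd2 J h k x) t) (J h k).

Definition jdt (F : JetFun) : JetFun :=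
  fun J t => deriv (fun s => F J s) t.

Definition tder (l K : nat) (F : JetFun) : JetFun :=
  fun J t => jdt F J t +
    sumR (S K) (fun h => sumR l (fun k => jpd h k F J t * J (S h) k)).

Fixpoint jder (l K : nat) (F : JetFun) (n : nat) : JetFun :=
  match n with
  | O => F
  | S n' => tder l (K + n') (jder l K F n')
  end.

Definition Xh (l : nat) (X : nat -> (nat -> R) -> R -> R) (h j : nat) : JetFun :=
  jder l 0 (fun J t => X j (J 0%nat) t) h.

(** momenta Q = (m_1 P_1', ..., m_N P_N'): component j belongs to point j/3 *)
Definition Qmom (l : nat) (m : nat -> R) (X : nat -> (nat -> R) -> R -> R)
  (j : nat) : JetFun :=
  fun J t => m (j / 3)%nat * Xh l X 1 j J t.

Definition Qh (l : nat) (m : nat -> R) (X : nat -> (nat -> R) -> R -> R)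
  (r j : nat) : JetFun :=
  jder l 1 (Qmom l m X j) r.

Definition Tr (N l : nat) (m : nat -> R) (X : nat -> (nat -> R) -> R -> R)
  (r : nat) : JetFun :=
  fun J t => / 2 * sumR (3 * N) (fun j => Qh l m X r j J t * Xh l X (S r) j J t).

(* Main.v *)
Require Import Defs.
From Stdlib Require Import Reals List Arith Lia Lra ClassicalEpsilon FunctionalExtensionality.
From Coquelicot Require Import Coquelicot.
Open Scope R_scope.

Lemma deriv_lim f x L : derivable_pt_lim f x L -> deriv f x = L.
Proof.
  intro H. unfold deriv.
  assert (E : exists L', derivable_pt_lim f x L') by (exists L; exact H).
  pose proof (epsilon_spec (inhabits 0) _ E) as H'.
  eapply uniqueness_limite; eauto.
Qed.

Lemma Derive_lim f x L : derivable_pt_lim f x L -> Derive f x = L.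
Proof. intro H. apply is_derive_unique. apply (proj2 (is_derive_Reals f x L)). exact H. Qed.

Lemma dep_iter n f L : depends_only_on n f -> List.Forall (fun i => (i<n)%nat) L ->
  depends_only_on n (iter_pd L f).
Proof.
  intros Hf HL; induction HL as [|a L Ha HL IH]; simpl; auto.
  intros z z' Hz. unfold pdv. rewrite (Hz a Ha). f_equal.
  apply functional_extensionality; intro x. apply IH.
  intros i Hi. unfold upd1. destruct (i =? a); auto.
Qed.

Lemma smooth_der n f L i w : smooth_n n f -> List.Forall (fun i => (i<n)%nat) L -> (i<n)%nat ->
  derivable_pt_lim (fun x => iter_pd L f (upd1 w i x)) (w i) (iter_pd (i::L) f w).
Proof.
  intros [_ H] HL Hi. destruct (H L HL) as [_ Hd]. destruct (Hd i w Hi) as [L' HL'].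
  simpl. unfold pdv. rewrite (deriv_lim _ _ _ HL'). exact HL'.
Qed.

Lemma smooth_cont n f L : smooth_n n f -> List.Forall (fun i => (i<n)%nat) L -> continuous_n n (iter_pd L f).
Proof. intros [_ H] HL. apply (H L HL). Qed.

Lemma cont2 n h z a b : (a<n)%nat -> (b<n)%nat -> continuous_n n h ->
  continuity_2d_pt (fun u v => h (upd1 (upd1 z a u) b v)) (z a) (z b).
Proof.
  intros Ha Hb Hc eps.
  destruct (Hc z eps (cond_pos eps)) as [d [Hd H]].
  exists (mkposreal d Hd). intros u v Hu Hv. simpl in Hu, Hv.
  assert (E : upd1 (upd1 z a (z a)) b (z b) = z).
  { apply functional_extensionality; intro i; unfold upd1.
    destruct (Nat.eqb_spec i b); destruct (Nat.eqb_spec i a); subst; auto. }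
  rewrite E. apply H. intros i Hi. unfold upd1.
  destruct (Nat.eqb_spec i b); destruct (Nat.eqb_spec i a); subst; auto.
  rewrite Rminus_diag, Rabs_R0; auto.
Qed.

Lemma schwarz_iter n f L a b z : smooth_n n f -> List.Forall (fun i => (i<n)%nat) L ->
  (a<n)%nat -> (b<n)%nat -> iter_pd (a::b::L) f z = iter_pd (b::a::L) f z.
Proof.
  intros Hs HL Ha Hb.
  destruct (Nat.eq_dec a b) as [->|Hab]; [reflexivity|].
  pose (P := fun u v => upd1 (upd1 z a u) b v).
  assert (PA : forall u v x, upd1 (P u v) a x = P x v).
  { intros; apply functional_extensionality; intro i; unfold P, upd1.
    destruct (Nat.eqb_spec i b); destruct (Nat.eqb_spec i a); subst; auto; congruence. }
  assert (PB : forall u v x, upd1 (P u v) b x = P u x).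
  { intros; apply functional_extensionality; intro i; unfold P, upd1.
    destruct (Nat.eqb_spec i b); destruct (Nat.eqb_spec i a); subst; auto; congruence. }
  assert (Pa : forall u v, P u v a = u).
  { intros; unfold P, upd1. destruct (Nat.eqb_spec a b); [congruence|].
    rewrite Nat.eqb_refl; auto. }
  assert (Pb : forall u v, P u v b = v).
  { intros; unfold P, upd1. rewrite Nat.eqb_refl; auto. }
  assert (P0 : P (z a) (z b) = z).
  { apply functional_extensionality; intro i; unfold P, upd1.
    destruct (Nat.eqb_spec i b); destruct (Nat.eqb_spec i a); subst; auto. }
  assert (D1 : forall M u v, List.Forall (fun i => (i<n)%nat) M ->
     derivable_pt_lim (fun x => iter_pd M f (P x v)) u (iter_pd (a::M) f (P u v))).
  { intros M u v HM. pose proof (smooth_der n f M a (P u v) Hs HM Ha) as H.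
    rewrite Pa in H.
    replace (fun x => iter_pd M f (P x v)) with (fun x => iter_pd M f (upd1 (P u v) a x)); auto.
    apply functional_extensionality; intro x; rewrite PA; auto. }
  assert (D2 : forall M u v, List.Forall (fun i => (i<n)%nat) M ->
     derivable_pt_lim (fun x => iter_pd M f (P u x)) v (iter_pd (b::M) f (P u v))).
  { intros M u v HM. pose proof (smooth_der n f M b (P u v) Hs HM Hb) as H.
    rewrite Pb in H.
    replace (fun x => iter_pd M f (P u x)) with (fun x => iter_pd M f (upd1 (P u v) b x)); auto.
    apply functional_extensionality; intro x; rewrite PB; auto. }
  assert (E1 : forall v, (fun z' => Derive (fun t => iter_pd L f (P z' t)) v) =
                         (fun z' => iter_pd (b::L) f (P z' v))).
  { intro v; apply functional_extensionality; intro z'. apply Derive_lim, D2; auto. }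
  assert (E2 : forall u, (fun z' => Derive (fun t => iter_pd L f (P t z')) u) =
                         (fun z' => iter_pd (a::L) f (P u z'))).
  { intro u; apply functional_extensionality; intro z'. apply Derive_lim, D1; auto. }
  assert (S : Derive (fun z0 => Derive (fun t => iter_pd L f (P z0 t)) (z b)) (z a) =
              Derive (fun z0 => Derive (fun t => iter_pd L f (P t z0)) (z a)) (z b)).
  { apply (Schwarz (fun u v => iter_pd L f (P u v)) (z a) (z b)).
  - exists (mkposreal 1 Rlt_0_1). intros u v _ _.
    rewrite E1, E2. repeat split.
    + eexists; apply (proj2 (is_derive_Reals _ _ _)), D1; auto.
    + eexists; apply (proj2 (is_derive_Reals _ _ _)), D2; auto.
    + eexists; apply (proj2 (is_derive_Reals _ _ _)), D1; auto.
    + eexists; apply (proj2 (is_derive_Reals _ _ _)), D2; auto.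
  - replace (fun u v => Derive (fun z0 => Derive (fun t => iter_pd L f (P z0 t)) v) u)
      with (fun u v => iter_pd (a::b::L) f (P u v)).
    + apply (cont2 n); auto. apply smooth_cont; auto.
    + apply functional_extensionality; intro u; apply functional_extensionality; intro v.
      rewrite E1. symmetry. apply Derive_lim, D1; auto.
  - replace (fun u v => Derive (fun z0 => Derive (fun t => iter_pd L f (P t z0)) u) v)
      with (fun u v => iter_pd (b::a::L) f (P u v)).
    + apply (cont2 n); auto. apply smooth_cont; auto.
    + apply functional_extensionality; intro u; apply functional_extensionality; intro v.
      rewrite E2. symmetry. apply Derive_lim, D2; auto. }
  rewrite E1, E2 in S.
  rewrite (Derive_lim _ _ _ (D1 (b::L) _ _ (List.Forall_cons (P:=fun i => (i<n)%nat) _ Hb HL))) in S.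
  rewrite (Derive_lim _ _ _ (D2 (a::L) _ _ (List.Forall_cons (P:=fun i => (i<n)%nat) _ Ha HL))) in S.
  rewrite P0 in S. exact S.
Qed.
Lemma sumR_0 f : sumR 0 f = 0. Proof. reflexivity. Qed.
Lemma sumR_S n f : sumR (S n) f = sumR n f + f n.
Proof.
  unfold sumR. rewrite seq_S, map_app, fold_right_app. simpl.
  assert (G : forall a s, fold_right Rplus a s = fold_right Rplus 0 s + a).
  { intros a s; induction s; simpl; lra. }
  rewrite G; lra.
Qed.
Lemma sumR_ext_lt n f g : (forall i, (i<n)%nat -> f i = g i) -> sumR n f = sumR n g.
Proof. induction n; intros H; auto. rewrite !sumR_S, IHn, H; auto. Qed.
Lemma sumR_ext n f g : (forall i, f i = g i) -> sumR n f = sumR n g.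
Proof. intros; apply sumR_ext_lt; auto. Qed.
Lemma sumR_add n f g : sumR n (fun i => f i + g i) = sumR n f + sumR n g.
Proof. induction n; [unfold sumR; simpl; ring|]. rewrite !sumR_S, IHn; lra. Qed.
Lemma sumR_scal n c f : c * sumR n f = sumR n (fun i => c * f i).
Proof. induction n; [unfold sumR; simpl; ring|]. rewrite !sumR_S, <- IHn; lra. Qed.
Lemma sumR_zero n f : (forall i, (i<n)%nat -> f i = 0) -> sumR n f = 0.
Proof. induction n; intros H; auto. rewrite sumR_S, IHn, H; auto; lra. Qed.
Lemma sumR_delta n a g : sumR n (fun i => if i =? a then g i else 0) = if a <? n then g a else 0.
Proof.
  induction n; auto. rewrite sumR_S, IHn.
  destruct (Nat.eqb_spec n a); destruct (Nat.ltb_spec a n); destruct (Nat.ltb_spec a (S n));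
    subst; try lia; lra.
Qed.
Lemma sumR_extend m n f : (n <= m)%nat -> (forall i, (n <= i < m)%nat -> f i = 0) -> sumR m f = sumR n f.
Proof.
  induction m; intros H1 H2.
  - replace n with 0%nat by lia; auto.
  - destruct (Nat.eq_dec n (S m)) as [->|Hn]; auto.
    rewrite sumR_S, IHm, H2; try lia; [ring|intros; apply H2; lia].
Qed.
Lemma sumR_minus n f g : sumR n f - sumR n g = sumR n (fun i => f i - g i).
Proof. induction n; [unfold sumR; simpl; ring|]. rewrite !sumR_S, <- IHn; ring. Qed.
Inductive ex : Type :=
| Cst (c : R) | Var (h k : nat) | Atom (j : nat) (L : list nat)
| Add (a b : ex) | Mul (a b : ex).

Section Sym.
Variables (N l : nat) (X : nat -> (nat -> R) -> R -> R).
Hypothesis Hsm : forall j, (j < 3 * N)%nat -> smooth_n (S l) (fun z => X j z (z l)).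

Definition fX j (z : nat -> R) := X j z (z l).
Definition env (J : Jet) (t : R) : nat -> R := fun i => if Nat.ltb i l then J 0%nat i else t.

Fixpoint eval (e : ex) (J : Jet) (t : R) : R :=
  match e with
  | Cst c => c
  | Var h k => J h k
  | Atom j L => iter_pd L (fX j) (env J t)
  | Add a b => eval a J t + eval b J t
  | Mul a b => eval a J t * eval b J t
  end.

Fixpoint sd (h k : nat) (e : ex) : ex :=
  match e with
  | Cst _ => Cst 0
  | Var h' k' => Cst (if andb (Nat.eqb h' h) (Nat.eqb k' k) then 1 else 0)
  | Atom j L => if andb (Nat.eqb h 0) (Nat.ltb k l) then Atom j (k :: L) else Cst 0
  | Add a b => Add (sd h k a) (sd h k b)
  | Mul a b => Add (Mul (sd h k a) b) (Mul a (sd h k b))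
  end.

Fixpoint st (e : ex) : ex :=
  match e with
  | Cst _ => Cst 0
  | Var _ _ => Cst 0
  | Atom j L => Atom j (l :: L)
  | Add a b => Add (st a) (st b)
  | Mul a b => Add (Mul (st a) b) (Mul a (st b))
  end.

Definition ssum (n : nat) (f : nat -> ex) : ex := fold_right Add (Cst 0) (map f (seq 0 n)).
Arguments ssum : simpl never.

Definition stder (K : nat) (e : ex) : ex :=
  Add (st e) (ssum (S K) (fun h => ssum l (fun k => Mul (sd h k e) (Var (S h) k)))).

Fixpoint sjder (K : nat) (e : ex) (n : nat) : ex :=
  match n with O => e | S n' => stder (K + n') (sjder K e n') end.

Fixpoint wf (e : ex) : Prop :=
  match e with
  | Atom j L => (j < 3 * N)%nat /\ List.Forall (fun i => (i < S l)%nat) L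
  | Add a b | Mul a b => wf a /\ wf b
  | _ => True
  end.

Fixpoint ord (K : nat) (e : ex) : Prop :=
  match e with
  | Var h _ => (h <= K)%nat
  | Add a b | Mul a b => ord K a /\ ord K b
  | _ => True
  end.

Lemma eval_ssum n f J t : eval (ssum n f) J t = sumR n (fun i => eval (f i) J t).
Proof.
  unfold ssum, sumR. induction (seq 0 n); simpl; auto. rewrite IHl0; auto.
Qed.

Lemma wf_ssum n f : (forall i, (i < n)%nat -> wf (f i)) -> wf (ssum n f).
Proof.
  unfold ssum. intros H. assert (H' : forall i, In i (seq 0 n) -> wf (f i)).
  { intros i Hi. apply in_seq in Hi. apply H; lia. }
  induction (seq 0 n); simpl; auto. split; auto. apply H'; simpl; auto.
  apply IHl0. intros; apply H'; simpl; auto.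
Qed.

Lemma ord_ssum K n f : (forall i, (i < n)%nat -> ord K (f i)) -> ord K (ssum n f).
Proof.
  unfold ssum. intros H. assert (H' : forall i, In i (seq 0 n) -> ord K (f i)).
  { intros i Hi. apply in_seq in Hi. apply H; lia. }
  induction (seq 0 n); simpl; auto. split; auto. apply H'; simpl; auto.
  apply IHl0. intros; apply H'; simpl; auto.
Qed.

Lemma wf_sd h k e : wf e -> wf (sd h k e).
Proof.
  induction e; simpl; intuition.
  destruct (andb _ _) eqn:E; simpl; auto. apply andb_prop in E as [_ E].
  apply Nat.ltb_lt in E. split; auto.
Qed.

Lemma wf_st e : wf e -> wf (st e).
Proof. induction e; simpl; intuition. Qed.

Lemma wf_stder K e : wf e -> wf (stder K e).
Proof.
  intros H. unfold stder; cbn [wf ord]. split. apply wf_st; auto.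
  apply wf_ssum; intros. apply wf_ssum; intros. simpl. split; auto. apply wf_sd; auto.
Qed.

Lemma wf_sjder K e n : wf e -> wf (sjder K e n).
Proof. induction n; simpl; auto. intros; apply wf_stder; auto. Qed.

Lemma ord_mono K K' e : (K <= K')%nat -> ord K e -> ord K' e.
Proof. induction e; simpl; intuition lia. Qed.

Lemma ord_sd K h k e : ord K e -> ord K (sd h k e).
Proof. induction e; simpl; intuition. destruct (andb _ _); simpl; auto. Qed.

Lemma ord_st K e : ord K e -> ord K (st e).
Proof. induction e; simpl; intuition. Qed.

Lemma ord_stder K e : ord K e -> ord (S K) (stder K e).
Proof.
  intros H. unfold stder; cbn [wf ord]. split. apply ord_mono with K; auto. apply ord_st; auto.
  apply ord_ssum; intros. apply ord_ssum; intros. simpl. split; try lia.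
  apply ord_mono with K; auto. apply ord_sd; auto.
Qed.

Lemma sd_high K h k e J t : ord K e -> (K < h)%nat -> eval (sd h k e) J t = 0.
Proof.
  induction e; simpl; intros; auto.
  - destruct (Nat.eqb_spec h0 h); try lia; simpl; auto.
  - destruct (Nat.eqb_spec h 0); try lia; simpl; auto.
  - destruct H; rewrite IHe1, IHe2; auto; ring.
  - destruct H; rewrite IHe1, IHe2; auto; ring.
Qed.

Lemma upd2_same J h k : upd2 J h k (J h k) = J.
Proof.
  apply functional_extensionality; intro a; apply functional_extensionality; intro b.
  unfold upd2. destruct (Nat.eqb_spec a h); destruct (Nat.eqb_spec b k); subst; auto.
Qed.

Lemma iter_wf j L : (j < 3 * N)%nat -> List.Forall (fun i => (i < S l)%nat) L ->
  depends_only_on (S l) (iter_pd L (fX j)).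
Proof. intros Hj HL. apply dep_iter; auto. apply (Hsm j Hj). Qed.

Lemma sd_correct e h k J t : wf e ->
  derivable_pt_lim (fun x => eval e (upd2 J h k x) t) (J h k) (eval (sd h k e) J t).
Proof.
  induction e; simpl; intros Hw.
  - apply derivable_pt_lim_const.
  - unfold upd2. destruct (andb _ _).
    + apply derivable_pt_lim_id.
    + apply derivable_pt_lim_const.
  - destruct Hw as [Hj HL].
    destruct (andb (h =? 0) (k <? l)) eqn:E.
    + apply andb_prop in E as [E1 E2]. apply Nat.eqb_eq in E1. apply Nat.ltb_lt in E2. subst.
      assert (Ee : forall x, env (upd2 J 0 k x) t = upd1 (env J t) k x).
      { intro x; apply functional_extensionality; intro i. unfold env, upd2, upd1.
        destruct (Nat.eqb_spec i k); subst.
        - rewrite (proj2 (Nat.ltb_lt k l) E2). simpl. destruct (Nat.eqb_spec k k); try congruence; auto.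
        - destruct (i <? l); simpl; auto. }
      replace (fun x => iter_pd L (fX j) (env (upd2 J 0 k x) t))
        with (fun x => iter_pd L (fX j) (upd1 (env J t) k x))
        by (apply functional_extensionality; intro; rewrite Ee; auto).
      replace (J 0%nat k) with (env J t k) by (unfold env; rewrite (proj2 (Nat.ltb_lt k l) E2); auto).
      apply (smooth_der (S l)); auto. exact (Hsm j Hj).
    + simpl.
      assert (Ee : forall x, env (upd2 J h k x) t = env J t).
      { intro x; apply functional_extensionality; intro i. unfold env, upd2.
        destruct (Nat.ltb_spec i l); auto.
        destruct (Nat.eqb_spec 0 h); destruct (Nat.eqb_spec i k); subst; simpl; auto.
        simpl in E. apply Nat.ltb_ge in E. lia. }
      replace (fun x => iter_pd L (fX j) (env (upd2 J h k x) t))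
        with (fun _ : R => iter_pd L (fX j) (env J t))
        by (apply functional_extensionality; intro; rewrite Ee; auto).
      apply derivable_pt_lim_const.
  - destruct Hw. apply (derivable_pt_lim_plus (fun x => eval e1 (upd2 J h k x) t)
                        (fun x => eval e2 (upd2 J h k x) t)); auto.
  - destruct Hw.
    pose proof (derivable_pt_lim_mult (fun x => eval e1 (upd2 J h k x) t)
                        (fun x => eval e2 (upd2 J h k x) t) _ _ _ (IHe1 H) (IHe2 H0)) as D.
    simpl in D. rewrite upd2_same in D. exact D.
Qed.

Lemma st_correct e J t : wf e ->
  derivable_pt_lim (fun s => eval e J s) t (eval (st e) J t).
Proof.
  induction e; simpl; intros Hw.
  - apply derivable_pt_lim_const.
  - apply derivable_pt_lim_const.
  - destruct Hw as [Hj HL].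
    replace (fun s => iter_pd L (fX j) (env J s))
      with (fun s => iter_pd L (fX j) (upd1 (env J t) l s)).
    + pose proof (smooth_der (S l) (fX j) L l (env J t) (Hsm j Hj) HL (Nat.lt_succ_diag_r l)) as D.
      replace (env J t l) with t in D by (unfold env; rewrite Nat.ltb_irrefl; auto).
      exact D.
    + apply functional_extensionality; intro s. apply iter_wf; auto.
      intros i Hi. unfold upd1, env. destruct (Nat.eqb_spec i l); subst.
      * rewrite Nat.ltb_irrefl; auto.
      * destruct (Nat.ltb_spec i l); auto; lia.
  - destruct Hw. apply (derivable_pt_lim_plus (fun s => eval e1 J s) (fun s => eval e2 J s)); auto.
  - destruct Hw.
    exact (derivable_pt_lim_mult (fun s => eval e1 J s) (fun s => eval e2 J s) _ _ _ (IHe1 H) (IHe2 H0)).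
Qed.

Lemma jpd_eval e h k : wf e -> jpd h k (eval e) = eval (sd h k e).
Proof.
  intros Hw. apply functional_extensionality; intro J; apply functional_extensionality; intro t.
  unfold jpd. apply deriv_lim, sd_correct; auto.
Qed.

Lemma jdt_eval e : wf e -> jdt (eval e) = eval (st e).
Proof.
  intros Hw. apply functional_extensionality; intro J; apply functional_extensionality; intro t.
  unfold jdt. apply deriv_lim, st_correct; auto.
Qed.

Lemma tder_eval K e : wf e -> tder l K (eval e) = eval (stder K e).
Proof.
  intros Hw. apply functional_extensionality; intro J; apply functional_extensionality; intro t.
  unfold tder, stder. cbn [eval]. rewrite jdt_eval; auto. f_equal.
  rewrite eval_ssum. apply sumR_ext; intro h. rewrite eval_ssum. apply sumR_ext; intro k.
  cbn [eval]. rewrite jpd_eval; auto.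
Qed.

Lemma jder_eval K e n : wf e -> jder l K (eval e) n = eval (sjder K e n).
Proof.
  intros Hw. induction n; simpl; auto. rewrite IHn. apply tder_eval. apply wf_sjder; auto.
Qed.


Lemma eval_sd_ssum h k n f J t :
  eval (sd h k (ssum n f)) J t = sumR n (fun i => eval (sd h k (f i)) J t).
Proof.
  unfold ssum, sumR. induction (seq 0 n); simpl; auto. rewrite IHl0; auto.
Qed.

Lemma comm_sd e h k h' k' J t : wf e ->
  eval (sd h k (sd h' k' e)) J t = eval (sd h' k' (sd h k e)) J t.
Proof.
  induction e; simpl; intros Hw; auto.
  - destruct Hw as [Hj HL].
    destruct (andb (h' =? 0) (k' <? l)) eqn:E1; destruct (andb (h =? 0) (k <? l)) eqn:E2;
      simpl; rewrite ?E1, ?E2; simpl; auto.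
    apply andb_prop in E1 as [_ E1]; apply andb_prop in E2 as [_ E2].
    apply Nat.ltb_lt in E1; apply Nat.ltb_lt in E2.
    apply (schwarz_iter (S l)); auto. exact (Hsm j Hj).
  - destruct Hw; rewrite IHe1, IHe2; auto.
  - destruct Hw; rewrite IHe1, IHe2; auto; ring.
Qed.

Lemma comm_st e h k J t : wf e ->
  eval (sd h k (st e)) J t = eval (st (sd h k e)) J t.
Proof.
  induction e; simpl; intros Hw.
  - auto.
  - auto.
  - destruct Hw as [Hj HL].
    destruct (andb (h =? 0) (k <? l)) eqn:E2; simpl; auto.
    apply andb_prop in E2 as [_ E2]. apply Nat.ltb_lt in E2.
    apply (schwarz_iter (S l)); auto. exact (Hsm j Hj).
  - destruct Hw; rewrite IHe1, IHe2; auto.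
  - destruct Hw; rewrite IHe1, IHe2; auto. ring.
Qed.

Lemma sd_stder K e h k J t : wf e -> (k < l)%nat ->
  eval (sd h k (stder K e)) J t = eval (stder K (sd h k e)) J t +
    match h with O => 0 | S h0 => if h0 <=? K then eval (sd h0 k e) J t else 0 end.
Proof.
  intros Hw Hk.
  assert (R1 : forall e', eval (ssum (S K) (fun h0 => ssum l (fun k0 => Mul (sd h0 k0 e') (Var (S h0) k0)))) J t
     = sumR (S K) (fun h0 => sumR l (fun k0 => eval (sd h0 k0 e') J t * J (S h0) k0))).
  { intro; rewrite eval_ssum; apply sumR_ext; intro; rewrite eval_ssum; apply sumR_ext; intro; reflexivity. }
  unfold stder. cbn [sd eval]. rewrite R1.
  rewrite eval_sd_ssum, comm_st; auto.
  rewrite (sumR_ext _ _ (fun h' => sumR l (fun k' => eval (sd h' k' (sd h k e)) J t * J (S h') k')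
      + sumR l (fun k' => eval (sd h' k' e) J t * (if andb (S h' =? h) (k' =? k) then 1 else 0)))).
  2:{ intro h'. rewrite eval_sd_ssum, <- sumR_add. apply sumR_ext; intro k'.
      cbn [sd eval]. rewrite comm_sd; auto. }
  rewrite sumR_add. rewrite Rplus_assoc. f_equal. f_equal.
  destruct h as [|h0].
  - apply sumR_zero; intros. apply sumR_zero; intros. simpl. ring.
  - rewrite (sumR_ext _ _ (fun h' => if h' =? h0 then eval (sd h' k e) J t else 0)).
    + rewrite sumR_delta. destruct (Nat.ltb_spec h0 (S K)); destruct (Nat.leb_spec h0 K); auto; lia.
    + intro h'. simpl. destruct (h' =? h0) eqn:E.
      * apply Nat.eqb_eq in E; subst.
        rewrite (sumR_ext _ _ (fun k' => if k' =? k then eval (sd h0 k' e) J t else 0)).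
        -- rewrite sumR_delta. destruct (Nat.ltb_spec k l); auto; lia.
        -- intro k'. simpl. destruct (k' =? k); ring.
      * apply sumR_zero; intros. simpl. ring.
Qed.

Lemma sd_cong a b h k J t : wf a -> wf b -> (forall J t, eval a J t = eval b J t) ->
  eval (sd h k a) J t = eval (sd h k b) J t.
Proof.
  intros Ha Hb H. rewrite <- (jpd_eval a), <- (jpd_eval b); auto.
  replace (eval a) with (eval b); auto.
  apply functional_extensionality; intro; apply functional_extensionality; intro; auto.
Qed.

Lemma stder_cong a b K J t : wf a -> wf b -> (forall J t, eval a J t = eval b J t) ->
  eval (stder K a) J t = eval (stder K b) J t.
Proof.
  intros Ha Hb H. rewrite <- (tder_eval K a), <- (tder_eval K b); auto.
  replace (eval a) with (eval b); auto.
  apply functional_extensionality; intro; apply functional_extensionality; intro; auto.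
Qed.

Lemma stder_unf K e J t : eval (stder K e) J t =
  eval (st e) J t + sumR (S K) (fun h => sumR l (fun k => eval (sd h k e) J t * J (S h) k)).
Proof.
  unfold stder. cbn [eval]. f_equal. rewrite eval_ssum; apply sumR_ext; intro.
  rewrite eval_ssum; apply sumR_ext; intro; reflexivity.
Qed.

Lemma stder_ord K K' e J t : ord K e -> (K <= K')%nat ->
  eval (stder K' e) J t = eval (stder K e) J t.
Proof.
  intros Ho HK. rewrite !stder_unf. f_equal.
  apply sumR_extend; try lia. intros i Hi. apply sumR_zero; intros.
  rewrite (sd_high K); auto; try lia. ring.
Qed.

Lemma stder_cst K c J t : eval (stder K (Cst c)) J t = 0.
Proof.
  rewrite stder_unf. cbn [eval st]. rewrite sumR_zero; [ring|].
  intros; apply sumR_zero; intros; simpl; ring.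
Qed.

Lemma stder_add K a b J t : eval (stder K (Add a b)) J t = eval (stder K a) J t + eval (stder K b) J t.
Proof.
  rewrite !stder_unf. cbn [eval st sd].
  rewrite (sumR_ext _ _ (fun h => sumR l (fun k => eval (sd h k a) J t * J (S h) k) +
                                  sumR l (fun k => eval (sd h k b) J t * J (S h) k))).
  - rewrite sumR_add. ring.
  - intro h. rewrite <- sumR_add. apply sumR_ext; intro k. simpl. ring.
Qed.

Lemma stder_mul K a b J t : eval (stder K (Mul a b)) J t =
  eval (stder K a) J t * eval b J t + eval a J t * eval (stder K b) J t.
Proof.
  rewrite !stder_unf. cbn [eval st sd].
  rewrite (sumR_ext _ _ (fun h => eval b J t * sumR l (fun k => eval (sd h k a) J t * J (S h) k) +
                                  eval a J t * sumR l (fun k => eval (sd h k b) J t * J (S h) k))).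
  - rewrite sumR_add, <- !sumR_scal. ring.
  - intro h. rewrite !sumR_scal, <- sumR_add. apply sumR_ext; intro k. simpl. ring.
Qed.

Lemma stder_ssum K n f J t : eval (stder K (ssum n f)) J t = sumR n (fun i => eval (stder K (f i)) J t).
Proof.
  unfold ssum, sumR. induction (seq 0 n); cbn [fold_right map].
  - apply stder_cst.
  - rewrite stder_add, IHl0. auto.
Qed.

Variable m : nat -> R.
Hypothesis Hdep : forall j, (j < 3 * N)%nat -> forall q q' t,
  (forall i, (i < l)%nat -> q i = q' i) -> X j q t = X j q' t.

Definition sX h j := sjder 0 (Atom j nil) h.
Definition sQ r j := sjder 1 (Mul (Cst (m (j / 3))) (sX 1 j)) r.
Definition sT r := Mul (Cst (/2)) (ssum (3 * N) (fun j => Mul (sQ r j) (sX (S r) j))).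

Lemma wf_sX h j : (j < 3 * N)%nat -> wf (sX h j).
Proof. intros; apply wf_sjder; simpl; auto. Qed.

Lemma wf_sQ r j : (j < 3 * N)%nat -> wf (sQ r j).
Proof. intros; apply wf_sjder; cbn [wf]; split; auto; apply wf_sX; auto. Qed.

Lemma wf_sT r : wf (sT r).
Proof.
  unfold sT; cbn [wf]; split; auto. apply wf_ssum; intros; cbn [wf]; split.
  apply wf_sQ; auto. apply wf_sX; auto.
Qed.

Lemma ord_sX h j : ord h (sX h j).
Proof. induction h; simpl; auto. apply ord_stder; auto. Qed.

Lemma F3 n j k J t : (j < 3 * N)%nat -> (k < l)%nat ->
  eval (sd n k (sX n j)) J t = eval (Atom j (k :: nil)) J t.
Proof.
  intros Hj Hk. revert J t. induction n; intros J t.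
  - simpl. rewrite (proj2 (Nat.ltb_lt _ _) Hk). reflexivity.
  - change (sX (S n) j) with (stder n (sX n j)).
    rewrite sd_stder; auto; [|apply wf_sX; auto]. rewrite Nat.leb_refl, IHn.
    rewrite (stder_cong _ (Cst 0)); [rewrite stder_cst; ring| | |].
    + apply wf_sd, wf_sX; auto.
    + simpl; auto.
    + intros; simpl. apply (sd_high n); [apply ord_sX|lia].
Qed.

Lemma F4 n j k J t : (j < 3 * N)%nat -> (k < l)%nat ->
  eval (sd n k (sX (S n) j)) J t = INR (S n) * eval (stder 0 (Atom j (k :: nil))) J t.
Proof.
  intros Hj Hk. revert J t. induction n; intros J t.
  - change (sX 1 j) with (stder 0 (sX 0 j)).
    rewrite sd_stder; auto; [|apply wf_sX; auto].
    rewrite (stder_cong _ (Atom j (k :: nil))).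
    + simpl INR. ring.
    + apply wf_sd, wf_sX; auto.
    + simpl; split; auto.
    + intros; apply F3; auto.
  - change (sX (S (S n)) j) with (stder (S n) (sX (S n) j)).
    rewrite sd_stder; auto; [|apply wf_sX; auto].
    rewrite (proj2 (Nat.leb_le n (S n)) (Nat.le_succ_diag_r n)), IHn.
    rewrite (stder_cong _ (Atom j (k :: nil))).
    + rewrite (stder_ord 0 (S n)); [|cbn [ord]; auto|lia]. rewrite (S_INR (S n)). ring.
    + apply wf_sd, wf_sX; auto.
    + simpl; split; auto.
    + intros; apply F3; auto.
Qed.

Lemma Q_val r j J t : (j < 3 * N)%nat -> eval (sQ r j) J t = m (j / 3) * eval (sX (S r) j) J t.
Proof.
  intros Hj. revert J t. induction r; intros J t; auto.
  unfold sQ. change (sjder 1 (Mul (Cst (m (j / 3))) (sX 1 j)) (S r)) with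
     (stder (S r) (sQ r j)).
  rewrite (stder_cong _ (Mul (Cst (m (j / 3))) (sX (S r) j))).
  - rewrite stder_mul, stder_cst. cbn [eval]. change (stder (S r) (sX (S r) j)) with (sX (S (S r)) j). ring.
  - apply wf_sQ; auto.
  - cbn [wf]; split; auto. apply wf_sX; auto.
  - intros; simpl. apply IHr.
Qed.

Lemma sdQ h k r j J t : (j < 3 * N)%nat ->
  eval (sd h k (sQ r j)) J t = m (j / 3) * eval (sd h k (sX (S r) j)) J t.
Proof.
  intros Hj. rewrite (sd_cong _ (Mul (Cst (m (j / 3))) (sX (S r) j))).
  - simpl. ring.
  - apply wf_sQ; auto.
  - cbn [wf]; split; auto. apply wf_sX; auto.
  - intros; simpl. apply Q_val; auto.
Qed.

Lemma base_eval j : (j < 3 * N)%nat -> (fun (J : Jet) (t : R) => X j (J 0%nat) t) = eval (Atom j nil).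
Proof.
  intros Hj. apply functional_extensionality; intro J; apply functional_extensionality; intro t.
  simpl. unfold fX. replace (env J t l) with t by (unfold env; rewrite Nat.ltb_irrefl; auto).
  apply Hdep; auto. intros i Hi. unfold env. rewrite (proj2 (Nat.ltb_lt _ _) Hi). auto.
Qed.

Lemma Xh_eval h j : (j < 3 * N)%nat -> Xh l X h j = eval (sX h j).
Proof. intros Hj. unfold Xh. rewrite base_eval; auto. apply jder_eval. simpl; auto. Qed.

Lemma Qh_eval r j : (j < 3 * N)%nat -> Qh l m X r j = eval (sQ r j).
Proof.
  intros Hj. unfold Qh.
  replace (Qmom l m X j) with (eval (Mul (Cst (m (j / 3))) (sX 1 j))).
  - apply jder_eval. cbn [wf]; split; auto. apply wf_sX; auto.
  - apply functional_extensionality; intro J; apply functional_extensionality; intro t.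
    unfold Qmom. simpl. rewrite Xh_eval; auto.
Qed.

Lemma Tr_eval r : Tr N l m X r = eval (sT r).
Proof.
  apply functional_extensionality; intro J; apply functional_extensionality; intro t.
  unfold Tr, sT. cbn [eval]. rewrite eval_ssum. f_equal. apply sumR_ext_lt; intros j Hj.
  cbn [eval]. rewrite Qh_eval, Xh_eval; auto.
Qed.

Lemma sd_sT h k r J t : eval (sd h k (sT r)) J t =
  / 2 * sumR (3 * N) (fun j => m (j / 3) * eval (sd h k (sX (S r) j)) J t * eval (sX (S r) j) J t
     + m (j / 3) * eval (sX (S r) j) J t * eval (sd h k (sX (S r) j)) J t).
Proof.
  unfold sT. cbn [sd eval]. rewrite eval_sd_ssum.
  rewrite Rmult_0_l, Rplus_0_l. f_equal. apply sumR_ext_lt; intros j Hj.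
  cbn [sd eval]. rewrite sdQ, Q_val; auto.
Qed.

Lemma main_sym r k J t : (k < l)%nat ->
  sumR (3 * N) (fun j => Qh l m X (S r) j J t * jpd 0 k (fun J' t' => X j (J' 0%nat) t') J t)
  = tder l (S r) (jpd (S r) k (Tr N l m X r)) J t
    - / (INR r + 1) * jpd r k (Tr N l m X r) J t.
Proof.
  intros Hk. rewrite Tr_eval, !jpd_eval, tder_eval; try apply wf_sT; [|apply wf_sd, wf_sT].
  pose (A := ssum (3 * N) (fun j => Mul (Cst (m (j / 3))) (Mul (sX (S r) j) (Atom j (k :: nil))))).
  rewrite (stder_cong _ A); [| apply wf_sd, wf_sT | | ].
  2:{ apply wf_ssum; intros i Hi; cbn [wf]; split; [exact I | split; [apply wf_sX; auto | split; [exact Hi|constructor; [lia|constructor]]]]. }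
  2:{ intros J' t'. rewrite sd_sT. unfold A. rewrite eval_ssum, sumR_scal.
      apply sumR_ext_lt; intros j Hj. rewrite F3; auto. simpl. field. }
  unfold A. rewrite stder_ssum, sd_sT.
  rewrite (sumR_ext_lt _ (fun i => eval (stder (S r) (Mul (Cst (m (i / 3))) (Mul (sX (S r) i) (Atom i (k :: nil))))) J t) (fun j => m (j / 3) * (eval (sX (S (S r)) j) J t * eval (Atom j (k :: nil)) J t
      + eval (sX (S r) j) J t * eval (stder 0 (Atom j (k :: nil))) J t))).
  2:{ intros j Hj. rewrite !stder_mul, stder_cst. cbn [eval].
      rewrite (stder_ord 0 (S r) (Atom j (k :: nil))); [|cbn [ord]; auto|lia]. change (stder (S r) (sX (S r) j)) with (sX (S (S r)) j). ring. }
  rewrite sumR_scal, sumR_scal, sumR_minus. apply sumR_ext_lt; intros j Hj.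
  rewrite Qh_eval, Q_val, F4; auto.
  rewrite base_eval; auto. rewrite jpd_eval; [|cbn [wf]; auto].
  replace (eval (sd 0 k (Atom j nil)) J t) with (eval (Atom j (k :: nil)) J t)
    by (symmetry; apply (F3 0); auto).
  rewrite S_INR. field. pose proof (pos_INR r). lra.
Qed.

End Sym.

Theorem proposition1p4 (N l : nat) (m : nat -> R) (X : nat -> (nat -> R) -> R -> R)
  (Hm : forall i, (i < N)%nat -> 0 < m i)
  (HX : smooth_config N l X) (r : nat) :
  forall k, (k < l)%nat -> forall (J : Jet) (t : R),
    sumR (3 * N) (fun j => Qh l m X (S r) j J t * jpd 0 k (fun J' t' => X j (J' 0%nat) t') J t)
    = tder l (S r) (jpd (S r) k (Tr N l m X r)) J t
      - / (INR r + 1) * jpd r k (Tr N l m X r) J t.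
Proof.
  intros k Hk J t.
  apply main_sym; auto.
  - intros j Hj. exact (proj2 (HX j Hj)).
  - intros j Hj q q' t' H. exact (proj1 (HX j Hj) q q' t' H).
Qed.
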